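(* Let $\approx$ be an equivalence relation on $\mathbb W$ satisfying: for all $A,B\in\mathbb W$, $A\approx B$ iff $A\setminus B\approx B\setminus A$. Let $A,B,A',B'\in\mathbb W$ with $B\subseteq A$, $B'\subseteq A'$ and $B\approx B'$. Then $A\setminus B\approx A'\setminus B'$ if and only if $A\approx A'$.
   Context: Let $\mathbb N=\{0,1,2,\dots\}$. $\mathbb{W}$ is the family of finitary point sets: sets $A\subseteq\bigcup_{k\ge1}\mathbb N^k$ of finite tuples of natural numbers such that for every $n\in\mathbb N$ there is $h$ with $A\cap\{0,\dots,n\}^k=\emptyset$ for all $k>h$. *)

(* Defs.v *)
From Stdlib Require Import List Arith.
Import ListNotations.

Definition point_set := list nat -> Prop.

Definition psubset (A B : point_set) : Prop := forall x, A x -> B x.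
Definition pdiff (A B : point_set) : point_set := fun x => A x /\ ~ B x.

(* A is finitary: A consists of tuples of length k >= 1, and for every n
   there is h such that A meets no {0,...,n}^k with k > h. *)
Definition in_W (A : point_set) : Prop :=
  (forall x, A x -> 1 <= length x) /\
  forall n : nat, exists h : nat, forall x : list nat,
    A x -> h < length x -> ~ (forall i, In i x -> i <= n).

Definition equiv_on_W (R : point_set -> point_set -> Prop) : Prop :=
  (forall A, in_W A -> R A A) /\
  (forall A B, in_W A -> in_W B -> R A B -> R B A) /\
  (forall A B C, in_W A -> in_W B -> in_W C -> R A B -> R B C -> R A C).

(* Main.v *)
Require Import Defs.
From Stdlib Require Import List Arith Lia Classical FunctionalExtensionality PropExtensionality.

Lemma ps_ext (X Y : point_set) : (forall x, X x <-> Y x) -> X = Y.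
Proof. intro H. apply functional_extensionality; intro x. apply propositional_extensionality; auto. Qed.

Lemma in_W_sub (X U : point_set) : in_W U -> (forall x, X x -> U x) -> in_W X.
Proof.
  intros [H1 H2] S. split. intros x Hx; auto.
  intros n. destruct (H2 n) as [h Hh]. exists h. intros x Hx. apply Hh; auto.
Qed.

Lemma in_W_union (X Y : point_set) : in_W X -> in_W Y -> in_W (fun x => X x \/ Y x).
Proof.
  intros [H1 H2] [K1 K2]. split.
  - intros x [Hx|Hx]; auto.
  - intros n. destruct (H2 n) as [h Hh]. destruct (K2 n) as [k Hk].
    exists (max h k). intros x [Hx|Hx] Hl.
    + apply Hh; auto; lia.
    + apply Hk; auto; lia.
Qed.

Theorem lemma1p6 (R : point_set -> point_set -> Prop) :
  equiv_on_W R ->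
  (forall A B, in_W A -> in_W B -> (R A B <-> R (pdiff A B) (pdiff B A))) ->
  forall A B A' B' : point_set,
    in_W A -> in_W B -> in_W A' -> in_W B' ->
    psubset B A -> psubset B' A' -> R B B' ->
    (R (pdiff A B) (pdiff A' B') <-> R A A').
Proof.
  intros [Rr [Rs Rt]] Hax A B A' B' WA WB WA' WB' SB SB' HBB.
  set (U := fun x => A x \/ A' x).
  assert (WU : in_W U) by (apply in_W_union; auto).
  assert (Wsub : forall X, (forall x, X x -> A x \/ A' x) -> in_W X)
    by (intros X HX; apply (in_W_sub X U); auto).
  assert (Key : forall X Y P Q, (forall x, X x -> A x \/ A' x) -> (forall x, Y x -> A x \/ A' x) ->
     (forall x, (X x /\ ~ Y x) <-> P x) -> (forall x, (Y x /\ ~ X x) <-> Q x) ->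
     (R X Y <-> R P Q)).
  { intros X Y P Q HX HY HP HQ. rewrite (Hax X Y (Wsub X HX) (Wsub Y HY)).
    replace (pdiff X Y) with P by (symmetry; apply ps_ext; exact HP).
    replace (pdiff Y X) with Q by (symmetry; apply ps_ext; exact HQ). tauto. }
  unfold psubset, pdiff in *.
  set (S1 := fun x => A x /\ ~ B' x /\ ~ (~ B x /\ A' x)).
  set (S2 := fun x => ((A x /\ ~ B x) \/ B' x) /\ ~ B x /\ ~ (A' x /\ ~ B' x)).
  set (S3 := fun x => (B x /\ A' x /\ ~ B' x) \/ (A' x /\ ~ A x)).
  assert (W1 : in_W S1) by (apply Wsub; unfold S1; tauto).
  assert (W2 : in_W S2) by (apply Wsub; unfold S2; intros x; generalize (SB x) (SB' x); tauto).
  assert (W3 : in_W S3) by (apply Wsub; unfold S3; tauto).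
  assert (R12 : R S1 S2).
  { apply (proj2 (Key S1 S2 (fun x => B x /\ ~ B' x) (fun x => B' x /\ ~ B x) ltac:(unfold S1; tauto)
      ltac:(unfold S2; intros x; generalize (SB x) (SB' x); tauto)
      ltac:(intros x; unfold S1, S2; destruct (classic (A x)), (classic (B x)), (classic (A' x)), (classic (B' x)); generalize (SB x) (SB' x); tauto)
      ltac:(intros x; unfold S1, S2; destruct (classic (A x)), (classic (B x)), (classic (A' x)), (classic (B' x)); generalize (SB x) (SB' x); tauto))).
    apply (proj1 (Key B B' _ _ ltac:(intros x; generalize (SB x); tauto) ltac:(intros x; generalize (SB' x); tauto)
      (fun x => iff_refl _) (fun x => iff_refl _))). exact HBB. }
  assert (E23 : R S2 S3 <-> R (fun x => A x /\ ~ B x) (fun x => A' x /\ ~ B' x)).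
  { rewrite (Key S2 S3 (fun x => (A x /\ ~ B x) /\ ~ (A' x /\ ~ B' x)) (fun x => (A' x /\ ~ B' x) /\ ~ (A x /\ ~ B x))
      ltac:(unfold S2; intros x; generalize (SB x) (SB' x); tauto) ltac:(unfold S3; tauto)
      ltac:(intros x; unfold S3, S2; destruct (classic (A x)), (classic (B x)), (classic (A' x)), (classic (B' x)); generalize (SB x) (SB' x); tauto)
      ltac:(intros x; unfold S3, S2; destruct (classic (A x)), (classic (B x)), (classic (A' x)), (classic (B' x)); generalize (SB x) (SB' x); tauto)).
    rewrite (Key (fun x => A x /\ ~ B x) (fun x => A' x /\ ~ B' x) _ _ ltac:(intros x Hx; cbv beta in Hx; tauto) ltac:(intros x Hx; cbv beta in Hx; tauto)
      (fun x => iff_refl _) (fun x => iff_refl _)). tauto. }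
  assert (E13 : R S1 S3 <-> R A A').
  { rewrite (Key S1 S3 (fun x => A x /\ ~ A' x) (fun x => A' x /\ ~ A x) ltac:(unfold S1; tauto) ltac:(unfold S3; tauto)
      ltac:(intros x; unfold S1, S3; destruct (classic (A x)), (classic (B x)), (classic (A' x)), (classic (B' x)); generalize (SB x) (SB' x); tauto)
      ltac:(intros x; unfold S1, S3; destruct (classic (A x)), (classic (B x)), (classic (A' x)), (classic (B' x)); generalize (SB x) (SB' x); tauto)).
    rewrite (Key A A' _ _ ltac:(tauto) ltac:(tauto) (fun x => iff_refl _) (fun x => iff_refl _)). tauto. }
  split; intro H.
  - apply E13. apply (Rt S1 S2 S3); auto. apply E23. exact H.
  - apply E23. apply (Rt S2 S1 S3); auto. apply E13. exact H.
Qed.
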